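(* Let $v:\mathbb T\times\mathbb R\to\mathbb R$, $v=\frac12(v_1-v_{-1})$, where $v_{\pm1}$ satisfy: (H2) $\int_0^1v^2(\theta,r)\,d\theta\ne0$ for every $r\in\mathbb R$; (H3) $v_{\pm1}(\cdot,r)$ are trigonometric polynomials of degree at most $d$ for every $r$; (H4) for every rational $p/q$ with $\gcd(p,q)=1$, $1\le|q|\le2d$, and every $\theta$, $\sum_{k=1}^q[v_{-1}(\theta+k/q,p/q)-v_1(\theta+k/q,p/q)]^2\ne0$. Let $p/q$ be an Imaginary Rational, i.e. $\gcd(p,q)=1$ and $d<|q|<\varepsilon^{-b}$. Then for every $\theta$, $\sigma^2(\theta,p/q)\ne0$, where $\sigma^2(\theta,r)=\frac1q\sum_{k=0}^{q-1}v^2(\theta+kr,r)$.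
   Context: $\varepsilon>0$ and $b>0$ are parameters; $d$ is a positive integer; $\mathbb T=\mathbb R/\mathbb Z$. *)

(* Defs.v *)
From Stdlib Require Import Reals ZArith.
From Coquelicot Require Import Coquelicot.
Open Scope R_scope.

Fixpoint fsum (n : nat) (f : nat -> R) : R :=
  match n with
  | O => 0
  | S m => fsum m f + f m
  end.

(* f : T -> R (modelled as a function R -> R) is a real trigonometric
   polynomial of degree at most d:
   f(θ) = Σ_{j=0}^{d} (a_j cos(2πjθ) + b_j sin(2πjθ)). *)
Definition trig_poly_deg (d : nat) (f : R -> R) : Prop :=
  exists a b : nat -> R, forall th : R,
    f th = sum_f_R0 (fun j => a j * cos (2 * PI * INR j * th)
                            + b j * sin (2 * PI * INR j * th)) d.

Definition vfun (v1 vm1 : R -> R -> R) (th r : R) : R :=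
  (v1 th r - vm1 th r) / 2.

(* σ²(θ, r) = (1/q) Σ_{k=0}^{|q|-1} v²(θ + k r, r), with q the denominator of r *)
Definition sigma2 (v : R -> R -> R) (q : Z) (th r : R) : R :=
  / IZR q * fsum (Z.abs_nat q) (fun k => (v (th + INR k * r) r) ^ 2).

(* Main.v *)
Require Import Defs.
From Stdlib Require Import Reals ZArith Lia Lra.
From Coquelicot Require Import Coquelicot.
Open Scope R_scope.

Lemma sin_perZ (x : R) (k : Z) : sin (x + 2 * IZR k * PI) = sin x.
Proof.
  assert (s : sin (2 * IZR k * PI) = 0).
  { apply sin_eq_0_1; exists (2 * k)%Z; rewrite mult_IZR; ring. }
  assert (c : cos (2 * IZR k * PI) = 1).
  { replace (2 * IZR k * PI) with (2 * (IZR k * PI)) by ring.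
    rewrite cos_2a_sin, sin_eq_0_1 by (exists k; ring). ring. }
  rewrite sin_plus, s, c; ring.
Qed.

Lemma cos_perZ (x : R) (k : Z) : cos (x + 2 * IZR k * PI) = cos x.
Proof.
  assert (s : sin (2 * IZR k * PI) = 0).
  { apply sin_eq_0_1; exists (2 * k)%Z; rewrite mult_IZR; ring. }
  assert (c : cos (2 * IZR k * PI) = 1).
  { replace (2 * IZR k * PI) with (2 * (IZR k * PI)) by ring.
    rewrite cos_2a_sin, sin_eq_0_1 by (exists k; ring). ring. }
  rewrite cos_plus, s, c; ring.
Qed.

Lemma fsum_ext N f g : (forall n, (n < N)%nat -> f n = g n) -> fsum N f = fsum N g.
Proof.
  induction N; intros H; simpl; auto.
  rewrite IHN by (intros; apply H; lia). rewrite H by lia. reflexivity.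
Qed.

Lemma fsum_plus N f g : fsum N (fun n => f n + g n) = fsum N f + fsum N g.
Proof. induction N; simpl; [ring|rewrite IHN; ring]. Qed.

Lemma fsum_scal N c f : fsum N (fun n => c * f n) = c * fsum N f.
Proof. induction N; simpl; [ring|rewrite IHN; ring]. Qed.

Lemma fsum_const N c : fsum N (fun _ => c) = INR N * c.
Proof. induction N; simpl fsum; [simpl; ring|rewrite IHN, S_INR; ring]. Qed.

Lemma fsum_zero N f : (forall n, (n < N)%nat -> f n = 0) -> fsum N f = 0.
Proof. intros H; rewrite (fsum_ext N f (fun _ => 0)) by auto. rewrite fsum_const; ring. Qed.

Lemma fsum_nonneg_zero N f : (forall n, 0 <= f n) -> fsum N f = 0 ->
  forall n, (n < N)%nat -> f n = 0.
Proof.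
  induction N; intros Hp H n Hn; [lia|].
  assert (0 <= fsum N f).
  { clear H IHN Hn. induction N; simpl; [lra|]. specialize (Hp N); lra. }
  simpl in H. pose proof (Hp N).
  destruct (Nat.eq_dec n N) as [->|]; [lra|].
  apply IHN; auto; [lra|lia].
Qed.

Lemma tele_cos a h N :
  2 * sin (h/2) * fsum N (fun n => cos (a + INR n * h))
  = sin (a + INR N * h - h/2) - sin (a - h/2).
Proof.
  induction N; simpl fsum.
  - replace (a + INR 0 * h - h/2) with (a - h/2) by (simpl; lra). ring.
  - rewrite Rmult_plus_distr_l, IHN, S_INR.
    replace (a + (INR N + 1) * h - h/2) with ((a + INR N * h) + h/2) by lra.
    replace (a + INR N * h - h/2) with ((a + INR N * h) - h/2) by lra.
    rewrite sin_plus, sin_minus. ring.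
Qed.

Lemma tele_sin a h N :
  2 * sin (h/2) * fsum N (fun n => sin (a + INR n * h))
  = cos (a - h/2) - cos (a + INR N * h - h/2).
Proof.
  induction N; simpl fsum.
  - replace (a + INR 0 * h - h/2) with (a - h/2) by (simpl; lra). ring.
  - rewrite Rmult_plus_distr_l, IHN, S_INR.
    replace (a + (INR N + 1) * h - h/2) with ((a + INR N * h) + h/2) by lra.
    replace (a + INR N * h - h/2) with ((a + INR N * h) - h/2) by lra.
    rewrite (cos_plus (a + INR N * h) (h/2)), (cos_minus (a + INR N * h) (h/2)). ring.
Qed.

Lemma sum_cos_zero a h N k : sin (h/2) <> 0 -> INR N * h = 2 * IZR k * PI ->
  fsum N (fun n => cos (a + INR n * h)) = 0.
Proof.
  intros Hs Hk. pose proof (tele_cos a h N) as T.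
  replace (a + INR N * h - h/2) with ((a - h/2) + 2 * IZR k * PI) in T by lra.
  rewrite sin_perZ in T.
  apply (Rmult_eq_reg_l (2 * sin (h/2))); [lra| intro E; apply Hs; lra].
Qed.

Lemma sum_sin_zero a h N k : sin (h/2) <> 0 -> INR N * h = 2 * IZR k * PI ->
  fsum N (fun n => sin (a + INR n * h)) = 0.
Proof.
  intros Hs Hk. pose proof (tele_sin a h N) as T.
  replace (a + INR N * h - h/2) with ((a - h/2) + 2 * IZR k * PI) in T by lra.
  rewrite cos_perZ in T.
  apply (Rmult_eq_reg_l (2 * sin (h/2))); [lra| intro E; apply Hs; lra].
Qed.

Definition Good (th r : R) (N : nat) (g : R -> R) :=
  ex_RInt g 0 1 /\ fsum N (fun n => g (th + INR n * r)) = INR N * RInt g 0 1.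

Lemma Good_ext th r N f g : (forall x, f x = g x) -> Good th r N f -> Good th r N g.
Proof.
  intros E [H1 H2]; split.
  - apply (ex_RInt_ext f); auto.
  - rewrite <- (RInt_ext f) by auto. rewrite <- H2. apply fsum_ext; auto.
Qed.

Lemma Good_plus th r N f g : Good th r N f -> Good th r N g ->
  Good th r N (fun x => f x + g x).
Proof.
  intros [F1 F2] [G1 G2]; split.
  - apply (ex_RInt_plus f g); auto.
  - rewrite fsum_plus, F2, G2.
    rewrite (RInt_plus f g) by auto. unfold plus; simpl. ring.
Qed.

Lemma Good_scal th r N c f : Good th r N f -> Good th r N (fun x => c * f x).
Proof.
  intros [F1 F2]; split.
  - apply (ex_RInt_scal f); auto.
  - rewrite fsum_scal, F2.
    rewrite (RInt_scal f) by auto. unfold scal; simpl. unfold mult; simpl. ring.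
Qed.

Lemma Good_const th r N c : Good th r N (fun _ => c).
Proof.
  pose proof (is_RInt_const 0 1 c) as H.
  split; [eexists; exact H|].
  rewrite (is_RInt_unique _ _ _ _ H), fsum_const.
  unfold scal; simpl; unfold mult; simpl. ring.
Qed.

Lemma Good_sum th r N (F : nat -> R -> R) n :
  (forall j, (j <= n)%nat -> Good th r N (F j)) ->
  Good th r N (fun x => sum_f_R0 (fun j => F j x) n).
Proof.
  induction n; intros H.
  - simpl. apply H; lia.
  - simpl. apply (Good_plus th r N (fun x => sum_f_R0 (fun j => F j x) n) (F (S n))).
    + apply IHn; intros; apply H; lia.
    + apply H; lia.
Qed.

Definition Cz (m : Z) (x : R) := cos (2 * PI * IZR m * x).
Definition Sz (m : Z) (x : R) := sin (2 * PI * IZR m * x).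

Lemma RInt_Cz m : m <> 0%Z -> is_RInt (Cz m) 0 1 0.
Proof.
  intros Hm. assert (IZR m <> 0) by (apply not_0_IZR; auto).
  pose proof PI_RGT_0.
  assert (E : forall x, is_derive (fun x => sin(2*PI*IZR m*x)/(2*PI*IZR m)) x (Cz m x)).
  { intros x. unfold Cz. auto_derive; auto. field; split; lra. }
  pose proof (is_RInt_derive (fun x => sin(2*PI*IZR m*x)/(2*PI*IZR m)) (Cz m) 0 1) as I.
  assert (Z : minus (sin(2*PI*IZR m*1)/(2*PI*IZR m)) (sin(2*PI*IZR m*0)/(2*PI*IZR m)) = 0).
  2:{ match type of Z with ?L = _ => cut (is_RInt (Cz m) 0 1 L); [intro J; rewrite Z in J; exact J|] end. apply I; intros x _; auto.
    apply (@ex_derive_continuous R_AbsRing R_NormedModule). unfold Cz. auto_derive. auto. }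
  { unfold minus, plus, opp; simpl.
    rewrite Rmult_0_r, sin_0, Rmult_1_r.
    rewrite sin_eq_0_1 by (exists (2*m)%Z; rewrite mult_IZR; ring). field; lra. }
Qed.

Lemma RInt_Sz m : m <> 0%Z -> is_RInt (Sz m) 0 1 0.
Proof.
  intros Hm. assert (IZR m <> 0) by (apply not_0_IZR; auto).
  pose proof PI_RGT_0.
  assert (E : forall x, is_derive (fun x => - cos(2*PI*IZR m*x)/(2*PI*IZR m)) x (Sz m x)).
  { intros x. unfold Sz. auto_derive; auto. field; split; lra. }
  pose proof (is_RInt_derive (fun x => - cos(2*PI*IZR m*x)/(2*PI*IZR m)) (Sz m) 0 1) as I.
  assert (Z : minus (- cos(2*PI*IZR m*1)/(2*PI*IZR m)) (- cos(2*PI*IZR m*0)/(2*PI*IZR m)) = 0).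
  2:{ match type of Z with ?L = _ => cut (is_RInt (Sz m) 0 1 L); [intro J; rewrite Z in J; exact J|] end. apply I; intros x _; auto.
    apply (@ex_derive_continuous R_AbsRing R_NormedModule). unfold Sz. auto_derive. auto. }
  { unfold minus, plus, opp; simpl.
    rewrite Rmult_0_r, cos_0, Rmult_1_r.
    replace (2 * PI * IZR m) with (0 + 2 * IZR m * PI) by ring.
    rewrite cos_perZ, cos_0. field; lra. }
Qed.

Lemma Good_Cz th r N z m :
  INR N * r = IZR z ->
  (forall m, m <> 0%Z -> (Z.abs m < Z.of_nat N)%Z -> sin (PI * IZR m * r) <> 0) ->
  (Z.abs m < Z.of_nat N)%Z -> Good th r N (Cz m).
Proof.
  intros Hz Hs Hm.
  destruct (Z.eq_dec m 0) as [->|Hm0].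
  - apply (Good_ext th r N (fun _ => 1)); [|apply Good_const].
    intros x; unfold Cz; rewrite Rmult_0_r, Rmult_0_l, cos_0; reflexivity.
  - pose proof (RInt_Cz m Hm0) as I. split; [eexists; exact I|].
    rewrite (is_RInt_unique _ _ _ _ I), Rmult_0_r.
    rewrite (fsum_ext N _ (fun n => cos (2*PI*IZR m*th + INR n * (2*PI*IZR m*r)))).
    + apply (sum_cos_zero _ _ _ (m * z)).
      * replace (2 * PI * IZR m * r / 2) with (PI * IZR m * r) by field. auto.
      * rewrite mult_IZR, <- Hz. ring.
    + intros n _. unfold Cz. f_equal. ring.
Qed.

Lemma Good_Sz th r N z m :
  INR N * r = IZR z ->
  (forall m, m <> 0%Z -> (Z.abs m < Z.of_nat N)%Z -> sin (PI * IZR m * r) <> 0) ->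
  (Z.abs m < Z.of_nat N)%Z -> Good th r N (Sz m).
Proof.
  intros Hz Hs Hm.
  destruct (Z.eq_dec m 0) as [->|Hm0].
  - apply (Good_ext th r N (fun _ => 0)); [|apply Good_const].
    intros x; unfold Sz; rewrite Rmult_0_r, Rmult_0_l, sin_0; reflexivity.
  - pose proof (RInt_Sz m Hm0) as I. split; [eexists; exact I|].
    rewrite (is_RInt_unique _ _ _ _ I), Rmult_0_r.
    rewrite (fsum_ext N _ (fun n => sin (2*PI*IZR m*th + INR n * (2*PI*IZR m*r)))).
    + apply (sum_sin_zero _ _ _ (m * z)).
      * replace (2 * PI * IZR m * r / 2) with (PI * IZR m * r) by field. auto.
      * rewrite mult_IZR, <- Hz. ring.
    + intros n _. unfold Sz. f_equal. ring.
Qed.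


Lemma Good_lin4 th r N c1 c2 c3 c4 f1 f2 f3 f4 :
  Good th r N f1 -> Good th r N f2 -> Good th r N f3 -> Good th r N f4 ->
  Good th r N (fun x => c1 * f1 x + c2 * f2 x + c3 * f3 x + c4 * f4 x).
Proof.
  intros.
  apply (Good_plus th r N (fun x => c1 * f1 x + c2 * f2 x + c3 * f3 x) (fun x => c4 * f4 x)); [|apply Good_scal; auto].
  apply (Good_plus th r N (fun x => c1 * f1 x + c2 * f2 x) (fun x => c3 * f3 x)); [|apply Good_scal; auto].
  apply (Good_plus th r N (fun x => c1 * f1 x) (fun x => c2 * f2 x)); apply Good_scal; auto.
Qed.

Definition uf (a b : nat -> R) (j : nat) (x : R) :=
  a j * cos (2 * PI * INR j * x) + b j * sin (2 * PI * INR j * x).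

Lemma prod_formula a b j k x :
  uf a b j x * uf a b k x =
  (a j * a k / 2 + b j * b k / 2) * Cz (Z.of_nat j - Z.of_nat k) x
  + (a j * a k / 2 - b j * b k / 2) * Cz (Z.of_nat j + Z.of_nat k) x
  + (a j * b k / 2 + b j * a k / 2) * Sz (Z.of_nat j + Z.of_nat k) x
  + (b j * a k / 2 - a j * b k / 2) * Sz (Z.of_nat j - Z.of_nat k) x.
Proof.
  unfold uf, Cz, Sz. rewrite minus_IZR, plus_IZR, <- !INR_IZR_INZ.
  replace (2 * PI * (INR j - INR k) * x) with (2 * PI * INR j * x - 2 * PI * INR k * x) by ring.
  replace (2 * PI * (INR j + INR k) * x) with (2 * PI * INR j * x + 2 * PI * INR k * x) by ring.
  set (A := 2 * PI * INR j * x). set (B := 2 * PI * INR k * x).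
  rewrite (cos_minus A B), (cos_plus A B), (sin_minus A B), (sin_plus A B).
  field.
Qed.

Lemma Good_prod th r N z a b j k :
  INR N * r = IZR z ->
  (forall m, m <> 0%Z -> (Z.abs m < Z.of_nat N)%Z -> sin (PI * IZR m * r) <> 0) ->
  (j + k < N)%nat ->
  Good th r N (fun x => uf a b j x * uf a b k x).
Proof.
  intros Hz Hs Hjk.
  eapply Good_ext; [intro x; symmetry; apply prod_formula|].
  apply Good_lin4; [eapply Good_Cz|eapply Good_Cz|eapply Good_Sz|eapply Good_Sz]; eauto; lia.
Qed.

Lemma sq_sum (u : nat -> R) d :
  (sum_f_R0 u d) ^ 2 = sum_f_R0 (fun j => sum_f_R0 (fun k => u j * u k) d) d.
Proof.
  replace ((sum_f_R0 u d) ^ 2) with (sum_f_R0 u d * sum_f_R0 u d) by ring.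
  rewrite scal_sum. apply sum_eq; intros j _.
  rewrite scal_sum. apply sum_eq; intros k _. ring.
Qed.

Lemma Good_sq th r N z a b d :
  INR N * r = IZR z ->
  (forall m, m <> 0%Z -> (Z.abs m < Z.of_nat N)%Z -> sin (PI * IZR m * r) <> 0) ->
  (2 * d < N)%nat ->
  Good th r N (fun x => (sum_f_R0 (fun j => uf a b j x) d) ^ 2).
Proof.
  intros Hz Hs Hd.
  eapply Good_ext; [intro x; symmetry; apply sq_sum|].
  apply (Good_sum th r N (fun j x => sum_f_R0 (fun k => uf a b j x * uf a b k x) d)).
  intros j Hj.
  apply (Good_sum th r N (fun k x => uf a b j x * uf a b k x)).
  intros k Hk. eapply Good_prod; eauto; lia.
Qed.

Lemma trig_period d f : trig_poly_deg d f -> forall x z, f (x + IZR z) = f x.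
Proof.
  intros [a [b E]] x z. rewrite !E. apply sum_eq; intros j _.
  replace (2 * PI * INR j * (x + IZR z)) with (2 * PI * INR j * x + 2 * IZR (Z.of_nat j * z) * PI)
    by (rewrite mult_IZR, <- INR_IZR_INZ; ring).
  rewrite cos_perZ, sin_perZ. reflexivity.
Qed.

Lemma bezout_rep p q n : Z.gcd p q = 1%Z -> q <> 0%Z ->
  exists K w, (0 <= K < Z.abs q)%Z /\ (K * p = n + q * w)%Z.
Proof.
  intros G Hq. destruct (Z.gcd_bezout p q 1 G) as [u [v E]].
  assert (Ha : (0 < Z.abs q)%Z) by lia.
  pose proof (Z.div_mod (n * u) (Z.abs q) ltac:(lia)) as D.
  pose proof (Z.mod_pos_bound (n * u) (Z.abs q) Ha) as B.
  set (K := ((n * u) mod Z.abs q)%Z) in *. set (t := ((n * u) / Z.abs q)%Z) in *.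
  exists K.
  destruct (Z_lt_le_dec 0 q) as [Hp|Hn].
  - rewrite Z.abs_eq in D by lia. exists (- n * v - t * p)%Z. split; [lia|].
    assert (K = n * u - q * t)%Z by lia. subst K. assert (n * (u*p + v*q) = n)%Z by (rewrite E; ring). nia.
  - rewrite Z.abs_neq in D by lia. exists (- n * v + t * p)%Z. split; [lia|].
    assert (K = n * u + q * t)%Z by lia. subst K. assert (n * (u*p + v*q) = n)%Z by (rewrite E; ring). nia.
Qed.

Theorem lemma2 (eps b : R) (d : nat) (v1 vm1 : R -> R -> R)
  (Heps : 0 < eps) (Hb : 0 < b) (Hd : (0 < d)%nat)
  (* (H2) *)
  (H2 : forall r : R, RInt (fun th => (vfun v1 vm1 th r) ^ 2) 0 1 <> 0)
  (* (H3) *)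
  (H3 : forall r : R, trig_poly_deg d (fun th => v1 th r)
                    /\ trig_poly_deg d (fun th => vm1 th r))
  (* (H4) *)
  (H4 : forall (p q : Z), Z.gcd p q = 1%Z ->
          (1 <= Z.abs q <= 2 * Z.of_nat d)%Z ->
          forall th : R,
            fsum (Z.abs_nat q)
              (fun k => (vm1 (th + INR (S k) / IZR q) (IZR p / IZR q)
                         - v1 (th + INR (S k) / IZR q) (IZR p / IZR q)) ^ 2) <> 0)
  (p q : Z) (Hpq : Z.gcd p q = 1%Z)
  (Hq_low : (Z.of_nat d < Z.abs q)%Z)
  (Hq_up : IZR (Z.abs q) < Rpower eps (- b)) :
  forall th : R, sigma2 (vfun v1 vm1) q th (IZR p / IZR q) <> 0.
Proof.
  intros th. unfold sigma2.
  set (r := IZR p / IZR q).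
  assert (Hq0 : q <> 0%Z) by lia.
  assert (Hq0R : IZR q <> 0) by (apply not_0_IZR; auto).
  assert (HNR : INR (Z.abs_nat q) = IZR (Z.abs q))
    by (rewrite INR_IZR_INZ, Zabs2Nat.id_abs; reflexivity).
  destruct (H3 r) as [T1 Tm].
  destruct (Z_le_gt_dec (Z.abs q) (2 * Z.of_nat d)) as [Hsmall|Hlarge].
  -
    intros Hs.
    apply Rmult_integral in Hs. destruct Hs as [Hs|Hs].
    { apply (Rinv_neq_0_compat _ Hq0R); auto. }
    apply (H4 p q Hpq ltac:(lia) th).
    apply fsum_zero. intros n Hn.
    destruct (bezout_rep p q (Z.of_nat (S n)) Hpq Hq0) as [K [w [HK Ew]]].
    set (k' := Z.to_nat K).
    assert (Hk' : (k' < Z.abs_nat q)%nat) by (unfold k'; lia).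
    assert (Z0 : vfun v1 vm1 (th + INR k' * r) r = 0).
    { pose proof (fsum_nonneg_zero _ _ (fun n => pow2_ge_0 _) Hs k' Hk') as Z.
      simpl in Z. nra. }
    assert (Ey : th + INR (S n) / IZR q = (th + INR k' * r) + IZR (- w)).
    { unfold r, k'. rewrite (INR_IZR_INZ (Z.to_nat K)), Z2Nat.id by lia.
      rewrite (INR_IZR_INZ (S n)).
      apply (f_equal IZR) in Ew. rewrite mult_IZR, plus_IZR, mult_IZR in Ew.
      rewrite opp_IZR. replace (IZR (Z.of_nat (S n))) with (IZR K * IZR p - IZR q * IZR w) by lra. field. auto. }
    rewrite Ey, (trig_period _ _ T1), (trig_period _ _ Tm).
    unfold vfun in Z0. replace (vm1 (th + INR k' * r) r - v1 (th + INR k' * r) r)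
      with (- 2 * ((v1 (th + INR k' * r) r - vm1 (th + INR k' * r) r) / 2)) by field.
    rewrite Z0. ring.
  - (* large denominators: equidistribution *)
    destruct T1 as [a1 [b1 E1]]. destruct Tm as [am [bm Em]].
    set (a := fun j => (a1 j - am j) / 2). set (bb := fun j => (b1 j - bm j) / 2).
    assert (Hz : INR (Z.abs_nat q) * r = IZR (p * Z.sgn q)).
    { rewrite HNR. unfold r. rewrite mult_IZR.
      destruct (Z_lt_le_dec 0 q).
      - rewrite Z.abs_eq by lia. replace (Z.sgn q) with 1%Z by (symmetry; apply Z.sgn_pos; lia).
        field; auto.
      - rewrite Z.abs_neq by lia. replace (Z.sgn q) with (-1)%Z by (symmetry; apply Z.sgn_neg; lia).
        rewrite opp_IZR. field; auto. }
    assert (Hs : forall m, m <> 0%Z -> (Z.abs m < Z.of_nat (Z.abs_nat q))%Z ->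
                   sin (PI * IZR m * r) <> 0).
    { intros m Hm Hmq Hsin. apply sin_eq_0_0 in Hsin. destruct Hsin as [k Hk].
      assert (E : IZR m * IZR p = IZR k * IZR q).
      { pose proof PI_RGT_0. unfold r in Hk.
        apply (Rmult_eq_reg_l (PI / IZR q)); [|apply Rmult_integral_contrapositive; split; [lra|apply Rinv_neq_0_compat; auto]].
        replace (PI / IZR q * (IZR m * IZR p)) with (PI * IZR m * (IZR p / IZR q)) by (field; auto).
        rewrite Hk. field; auto. }
      rewrite <- !mult_IZR in E. apply eq_IZR in E.
      assert (Dv : (q | p * m)%Z) by (exists k; lia).
      apply Z.gauss in Dv; [|rewrite Z.gcd_comm; auto].
      destruct Dv as [c Hc]. subst m. rewrite Zabs2Nat.id_abs in Hmq.
      rewrite Z.abs_mul in Hmq. assert (c <> 0%Z) by (intro; subst; lia). nia. }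
    assert (Ev : forall x, vfun v1 vm1 x r = sum_f_R0 (fun j => uf a bb j x) d).
    { intros x. unfold vfun. rewrite E1, Em, <- minus_sum.
      unfold Rdiv. rewrite Rmult_comm, scal_sum. apply sum_eq; intros j _.
      unfold uf, a, bb. field. }
    assert (G : Good th r (Z.abs_nat q) (fun x => vfun v1 vm1 x r ^ 2)).
    { eapply Good_ext; [|apply (Good_sq th r (Z.abs_nat q) _ a bb d Hz Hs); lia].
      intros x. rewrite Ev. reflexivity. }
    destruct G as [_ G]. rewrite G.
    apply Rmult_integral_contrapositive; split; [apply Rinv_neq_0_compat; auto|].
    apply Rmult_integral_contrapositive; split; [rewrite HNR; apply not_0_IZR; lia|].
    apply H2.
Qed.
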